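(* Let $S_1,\ldots,S_m$ be propositional formulae. The lexicographic orders $[S_1,\ldots,S_{m-1},S_m]$ and $[S_1,\ldots,S_{m-1}]$ are equivalent if and only if either $Q \models S_m$ or $Q \models \neg S_m$ holds for every formula $Q = (B_1 \equiv S_1) \wedge \cdots \wedge (B_{m-1} \equiv S_{m-1})$, where each $B_i$ is either $\top$ or $\bot$.
   Context: Models are truth assignments. For a formula $F$: $I \leq_F J$ iff $I \models F$ or $J \not\models F$. For a sequence $S=[S_1,\ldots,S_m]$: $I \leq_S J$ iff either $S=[]$, or ($I \leq_{S_1} J$ and (either $J \not\leq_{S_1} I$ or $I \leq_R J$)), where $R=[S_2,\ldots,S_m]$. Two sequences $S$ and $R$ are equivalent if $I \leq_S J$ and $I\leq_R J$ coincide for all pairs of models $I,J$. *)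

(* Defs.v *)
From mathcomp Require Import all_boot.
Set Implicit Arguments. Unset Strict Implicit. Unset Printing Implicit Defensive.

Inductive form : Type :=
  | FVar of nat
  | FTop
  | FBot
  | FNeg of form
  | FAnd of form & form
  | FOr of form & form
  | FImp of form & form
  | FEqv of form & form.

Definition model := nat -> bool.

Fixpoint eval (I : model) (F : form) : bool :=
  match F with
  | FVar v => I v
  | FTop => true
  | FBot => false
  | FNeg G => ~~ eval I G
  | FAnd G H => eval I G && eval I H
  | FOr G H => eval I G || eval I H
  | FImp G H => eval I G ==> eval I H
  | FEqv G H => eval I G == eval I H
  end.

Definition entails (Q F : form) : Prop := forall I : model, eval I Q -> eval I F.

Definition le_form (F : form) (I J : model) : bool := eval I F || ~~ eval J F.

Fixpoint le_seq (S : seq form) (I J : model) : bool :=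
  match S with
  | [::] => true
  | F :: R => le_form F I J && (~~ le_form F J I || le_seq R I J)
  end.

Definition seq_equiv (S R : seq form) : Prop :=
  forall I J : model, le_seq S I J = le_seq R I J.

Definition bconst (b : bool) : form := if b then FTop else FBot.

Fixpoint big_and (l : seq form) : form :=
  match l with
  | [::] => FTop
  | [:: F] => F
  | F :: l' => FAnd F (big_and l')
  end.

Definition Qform (bs : seq bool) (S : seq form) : form :=
  big_and [seq FEqv (bconst p.1) p.2 | p <- zip bs S].

(* Main.v *)
Require Import Defs.
From mathcomp Require Import all_boot.
From Stdlib Require Import Classical.

Lemma eval_big_and I l : eval I (big_and l) = all (eval I) l.
Proof.
elim: l => [|F l IH] //=.
case: l IH => [|G l] IH /=; first by rewrite andbT.
by rewrite IH.
Qed.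

Lemma eval_Q I bs S : size bs = size S ->
  eval I (Qform bs S) = (map (eval I) S == bs).
Proof.
rewrite /Qform eval_big_and.
elim: S bs => [|F S IH] [|b bs] //= [] Hs.
rewrite IH // eqseq_cons; congr andb.
by case: b; case: (eval I F).
Qed.

Lemma le_seq_refl S I J : map (eval I) S = map (eval J) S -> le_seq S I J.
Proof.
elim: S => [|F S IH] //= [] HF /IH ->.
by rewrite /le_form HF; case: (eval J F).
Qed.

Lemma le_rcons S Sm I J : le_seq (rcons S Sm) I J =
  if map (eval I) S == map (eval J) S then le_form Sm I J else le_seq S I J.
Proof.
elim: S => [|F S IH] /=; first by rewrite /le_form; case: (eval I Sm); case: (eval J Sm).
rewrite IH eqseq_cons /le_form.
case: (eval I F); case: (eval J F) => //=.
Qed.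

Theorem theorem2 (S : seq form) (Sm : form) :
  seq_equiv (rcons S Sm) S <->
  (forall bs : seq bool, size bs = size S ->
     entails (Qform bs S) Sm \/ entails (Qform bs S) (FNeg Sm)).
Proof.
split.
- move=> H bs Hs.
  case: (classic (exists I, eval I (Qform bs S) && ~~ eval I Sm)).
  + move=> [I /andP [QI SI]]; right => J QJ /=.
    apply/negP => SJ.
    have := H I J; rewrite le_rcons.
    rewrite eval_Q // in QI; rewrite eval_Q // in QJ.
    rewrite (eqP QI) (eqP QJ) eqxx le_seq_refl; last by rewrite (eqP QI) (eqP QJ).
    by rewrite /le_form SJ (negbTE SI).
  + move=> NE; left => I QI.
    case E: (eval I Sm) => //; exfalso; apply: NE; exists I.
    by rewrite QI E.
- move=> H I J; rewrite le_rcons.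
  case: eqP => // Heq.
  rewrite le_seq_refl //.
  have Hs : size (map (eval I) S) = size S by rewrite size_map.
  have QI : eval I (Qform (map (eval I) S) S) by rewrite eval_Q.
  have QJ : eval J (Qform (map (eval I) S) S) by rewrite eval_Q // Heq.
  rewrite /le_form.
  case: (H _ Hs) => Hc.
  + by rewrite (Hc I QI).
  + by have := Hc J QJ => /= ->; rewrite orbT.
Qed.
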